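(* Let $(X,\mathrm{d})$ be a compact metric space. The metrics $\mathrm{d}_L$ and $\mathrm{d}_W$ define the same topology on the set $\mathrm{Lip}(X,\mathrm{d})$ of bi-Lipschitz homeomorphisms of $X$.
   Context: $\mathrm{d}_{C^0}(f,g)=\max_{x}\mathrm{d}(f(x),g(x))+\max_x\mathrm{d}(f^{-1}(x),g^{-1}(x))$. $\mathrm{d}'_W(f,g)=\sup_{x\ne y}\frac{|\mathrm{d}(f(x),f(y))-\mathrm{d}(g(x),g(y))|}{\mathrm{d}(x,y)}$ and $\mathrm{d}_W(f,g)=\mathrm{d}_{C^0}(f,g)+\mathrm{d}'_W(f,g)+\mathrm{d}'_W(f^{-1},g^{-1})$. $\mathrm{d}'_L(f,g)=\sup_{x\ne y}\left|\log\frac{\mathrm{d}(f(x),f(y))}{\mathrm{d}(g(x),g(y))}\right|$ and $\mathrm{d}_L(f,g)=\mathrm{d}_{C^0}(f,g)+\mathrm{d}'_L(f,g)+\mathrm{d}'_L(f^{-1},g^{-1})$. *)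

(* Defs.v *)
From Stdlib Require Import Reals Lra List ClassicalEpsilon.
Open Scope R_scope.

(* Supremum of a set of reals, with the convention sup0 E := sup (E ∪ {0}).
   All sets below consist of nonnegative reals, so this is the usual sup
   (and the usual max when attained) whenever E is nonempty, and 0 if E is
   empty.  For bi-Lipschitz homeomorphisms of a compact space all the sets
   below are bounded, so the sup exists. *)
Definition sup0 (E : R -> Prop) : R :=
  epsilon (inhabits 0) (fun s => is_lub (fun t => t = 0 \/ E t) s).

Section Defs.
Variable M : Metric_Space.
Local Notation X := (Base M).
Local Notation d := (dist M).

Definition m_open (U : X -> Prop) : Prop :=
  forall x, U x -> exists r, r > 0 /\ forall y, d x y < r -> U y.

Definition compact_space : Prop :=
  forall (I : Type) (V : I -> X -> Prop),
    (forall i, m_open (V i)) ->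
    (forall x, exists i, V i x) ->
    exists l : list I, forall x, exists i, In i l /\ V i x.

(* A homeomorphism candidate is a pair (f, f^{-1}). *)
Definition hpair : Type := ((X -> X) * (X -> X))%type.

Definition is_biLip (p : hpair) : Prop :=
  let (f, g) := p in
  (forall x, g (f x) = x) /\ (forall x, f (g x) = x) /\
  exists K, K > 0 /\
    forall x y, d (f x) (f y) <= K * d x y /\ d x y <= K * d (f x) (f y).

Definition inv_pair (p : hpair) : hpair := (snd p, fst p).

Definition dC0 (p q : hpair) : R :=
  sup0 (fun t => exists x, t = d (fst p x) (fst q x)) +
  sup0 (fun t => exists x, t = d (snd p x) (snd q x)).

Definition dW' (f g : X -> X) : R :=
  sup0 (fun t => exists x y, x <> y /\
          t = Rabs (d (f x) (f y) - d (g x) (g y)) / d x y).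

Definition dW (p q : hpair) : R :=
  dC0 p q + dW' (fst p) (fst q) + dW' (snd p) (snd q).

Definition dL' (f g : X -> X) : R :=
  sup0 (fun t => exists x y, x <> y /\
          t = Rabs (ln (d (f x) (f y) / d (g x) (g y)))).

Definition dL (p q : hpair) : R :=
  dC0 p q + dL' (fst p) (fst q) + dL' (snd p) (snd q).

(* Open subsets of Lip(X,d) for a metric D on it (U is read as U ∩ Lip). *)
Definition lip_open (D : hpair -> hpair -> R) (U : hpair -> Prop) : Prop :=
  forall p, is_biLip p -> U p ->
    exists r, r > 0 /\ forall q, is_biLip q -> D p q < r -> U q.

End Defs.

(* Main.v *)
Require Import Defs.
From Stdlib Require Import Reals Lra ClassicalEpsilon List.
Open Scope R_scope.

Lemma sup0_lub (E : R -> Prop) (B : R) : (forall t, E t -> t <= B) ->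
  is_lub (fun t => t = 0 \/ E t) (sup0 E).
Proof.
  intro HB. unfold sup0. apply epsilon_spec.
  destruct (completeness (fun t => t = 0 \/ E t)) as [m Hm].
  - exists (Rmax 0 B). intros t [->|Ht]. apply Rmax_l. eapply Rle_trans. apply HB; auto. apply Rmax_r.
  - exists 0; auto.
  - exists m; exact Hm.
Qed.

Lemma sup0_ge0 E B : (forall t, E t -> t <= B) -> 0 <= sup0 E.
Proof. intro HB. destruct (sup0_lub E B HB) as [H _]. apply H. auto. Qed.

Lemma sup0_ub E B t : (forall t, E t -> t <= B) -> E t -> t <= sup0 E.
Proof. intros HB Ht. destruct (sup0_lub E B HB) as [H _]. apply H. auto. Qed.

Lemma sup0_le E c : (forall t, E t -> t <= c) -> 0 <= c -> sup0 E <= c.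
Proof. intros HB H0. destruct (sup0_lub E c HB) as [_ H]. apply H.
  intros t [->|Ht]; auto. Qed.

Lemma ln_le' x y : 0 < x -> x <= y -> ln x <= ln y.
Proof. intros Hx [H|H]. left; apply ln_increasing; auto. subst; lra. Qed.

Lemma ln_le_cancel x y : 0 < x -> 0 < y -> ln x <= ln y -> x <= y.
Proof. intros Hx Hy H. destruct (Rle_or_lt x y) as [h|h]; auto.
  pose proof (ln_increasing y x Hy h). lra. Qed.

Lemma ln1p_le e : 0 < e -> ln (1 + e) <= e.
Proof. intro. rewrite <- (ln_exp e) at 2. apply ln_le'. lra. apply exp_ineq1_le. Qed.

Lemma pairB (a b dd K w eps : R) : 0 < dd -> 0 < K -> 0 < b -> dd <= K * a ->
  Rabs (a - b) / dd <= w -> K * w <= eps / 2 -> 0 < eps <= 1 ->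
  Rabs (ln (a / b)) <= eps.
Proof.
  intros Hd HK Hb Ha Hw Hs He.
  assert (Ha0 : 0 < a) by nra.
  assert (Hab : Rabs (a - b) <= w * dd).
  { apply Rmult_le_compat_r with (r := dd) in Hw; [|lra].
    unfold Rdiv in Hw. rewrite Rmult_assoc, Rinv_l in Hw; lra. }
  assert (Hw0 : 0 <= w). { pose proof (Rabs_pos (a-b)). nra. }
  assert (H1 : Rabs (a - b) <= eps / 2 * a) by nra.
  pose proof (Rle_abs (a-b)). pose proof (Rle_abs (b-a)). rewrite Rabs_minus_sym in H0.
  assert (Hup : a / b <= 1 + eps).
  { apply Rmult_le_reg_r with b; auto. unfold Rdiv. rewrite Rmult_assoc, Rinv_l; nra. }
  assert (Hlo : / (1 + eps) <= a / b).
  { apply Rmult_le_reg_r with ((1+eps) * b). nra.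
    replace (/ (1 + eps) * ((1 + eps) * b)) with b by (field; lra).
    replace (a / b * ((1 + eps) * b)) with (a * (1+eps)) by (field; lra). nra. }
  assert (Hq : 0 < a / b) by (apply Rdiv_lt_0_compat; auto).
  apply Rabs_le; split.
  - apply ln_le' in Hlo; [|apply Rinv_0_lt_compat; lra].
    rewrite ln_Rinv in Hlo by lra. pose proof (ln1p_le eps). lra.
  - apply ln_le' in Hup; auto. pose proof (ln1p_le eps). lra.
Qed.

Lemma pairA (a b dd K L eta : R) : 0 < dd -> 0 < K -> 0 < a -> 0 < b -> a <= K * dd ->
  Rabs (ln (a / b)) <= L -> L <= ln (1 + eta) -> 0 < eta <= 1 ->
  Rabs (a - b) / dd <= 2 * K * eta.
Proof.
  intros Hd HK Ha Hb Had HL HLe He.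
  assert (Hq : 0 < a / b) by (apply Rdiv_lt_0_compat; auto).
  pose proof (Rle_abs (ln (a/b))). pose proof (Rle_abs (- ln (a/b))). rewrite Rabs_Ropp in *.
  assert (Hup : a / b <= 1 + eta).
  { apply ln_le_cancel; auto. lra. lra. }
  assert (Hlo : / (1 + eta) <= a / b).
  { apply ln_le_cancel; auto. apply Rinv_0_lt_compat; lra.
    rewrite ln_Rinv by lra. lra. }
  assert (E1 : a <= (1 + eta) * b).
  { apply Rmult_le_compat_r with (r := b) in Hup; [|lra].
    unfold Rdiv in Hup. rewrite Rmult_assoc, Rinv_l in Hup; lra. }
  assert (E2 : b <= (1 + eta) * a).
  { apply Rmult_le_compat_r with (r := (1+eta) * b) in Hlo; [|nra].
    replace (/ (1 + eta) * ((1 + eta) * b)) with b in Hlo by (field; lra).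
    replace (a / b * ((1 + eta) * b)) with (a * (1+eta)) in Hlo by (field; lra). nra. }
  apply Rmult_le_reg_r with dd; auto. unfold Rdiv. rewrite Rmult_assoc, Rinv_l by lra.
  rewrite Rmult_1_r. unfold Rabs; destruct (Rcase_abs (a - b)); nra.
Qed.
Section S.
Variable M : Metric_Space.
Local Notation X := (Base M).
Local Notation d := (dist M).

Definition PL (K : R) (f : X -> X) := forall x y, d (f x) (f y) <= K * d x y /\ d x y <= K * d (f x) (f y).

Lemma biLip_P p : is_biLip M p -> exists K, 0 < K /\ PL K (fst p) /\ PL K (snd p).
Proof.
  destruct p as [f g]; simpl. intros [H1 [H2 [K [HK H]]]].
  exists K; split; auto; split; auto.
  intros x y. destruct (H (g x) (g y)) as [A B]. rewrite !H2 in A, B. split; auto.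
Qed.

Lemma dpos x y : x <> y -> 0 < d x y.
Proof. intro H. destruct (dist_pos M x y) as [h|h]; auto. apply (dist_refl M) in h. tauto. Qed.

Lemma list_bound (x : X) (l : list X) : exists B, forall b, In b l -> d x b <= B.
Proof.
  induction l as [|a l [B HB]]. exists 0; simpl; tauto.
  exists (Rmax (d x a) B). intros b [->|Hb]. apply Rmax_l. eapply Rle_trans. apply HB; auto. apply Rmax_r.
Qed.

Lemma bounded : compact_space M -> exists B, forall y z, d y z <= B.
Proof.
  intro Hc. destruct (Hc X (fun x y => d x y < 1)) as [l Hl].
  - intros i x Hx. exists (1 - d i x). split. lra. intros y Hy.
    pose proof (dist_tri M i y x). lra.
  - intro x. exists x. rewrite (proj2 (dist_refl M x x) eq_refl). lra.
  - destruct l as [|a0 l].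
    + exists 0. intro y. destruct (Hl y) as [i [[] _]].
    + destruct (list_bound a0 (a0 :: l)) as [B HB]. exists (2 + 2 * B).
      intros y z. destruct (Hl y) as [i [Hi Hy]]. destruct (Hl z) as [j [Hj Hz]].
      pose proof (HB i Hi). pose proof (HB j Hj).
      pose proof (dist_tri M y z i). pose proof (dist_tri M i z a0). pose proof (dist_tri M a0 z j).
      rewrite (dist_sym M y i) in H1. rewrite (dist_sym M i a0) in H2.
      lra.
Qed.

Lemma dC0_ge0 : compact_space M -> forall p q, 0 <= dC0 M p q.
Proof.
  intros Hc p q. destruct (bounded Hc) as [B HB]. unfold dC0.
  pose proof (sup0_ge0 (fun t => exists x, t = d (fst p x) (fst q x)) B).
  pose proof (sup0_ge0 (fun t => exists x, t = d (snd p x) (snd q x)) B).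
  assert (0 <= sup0 (fun t => exists x, t = d (fst p x) (fst q x))) by (apply H; intros t [x ->]; auto).
  assert (0 <= sup0 (fun t => exists x, t = d (snd p x) (snd q x))) by (apply H0; intros t [x ->]; auto).
  lra.
Qed.

Lemma Wset_bound K K' f g : 0 < K -> 0 < K' -> PL K f -> PL K' g ->
  forall t, (exists x y, x <> y /\ t = Rabs (d (f x) (f y) - d (g x) (g y)) / d x y) -> t <= K + K'.
Proof.
  intros HK HK' Hf Hg t [x [y [Hxy ->]]]. pose proof (dpos x y Hxy).
  destruct (Hf x y), (Hg x y). pose proof (dist_pos M (f x) (f y)). pose proof (dist_pos M (g x) (g y)).
  apply Rmult_le_reg_r with (d x y); auto. unfold Rdiv. rewrite Rmult_assoc, Rinv_l by lra.
  rewrite Rmult_1_r. unfold Rabs; destruct (Rcase_abs _); nra.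
Qed.

Lemma ln_abs_bound t C : 0 < t -> t <= C -> / t <= C -> Rabs (ln t) <= C.
Proof.
  intros Ht H1 H2. assert (0 < / t) by (apply Rinv_0_lt_compat; auto).
  pose proof (ln1p_le t Ht). pose proof (ln1p_le (/ t) H).
  pose proof (ln_le' t (1 + t) Ht ltac:(lra)). pose proof (ln_le' (/ t) (1 + / t) H ltac:(lra)).
  rewrite ln_Rinv in * by auto.
  unfold Rabs; destruct (Rcase_abs _); lra.
Qed.

Lemma Lset_bound K K' f g : 0 < K -> 0 < K' -> PL K f -> PL K' g ->
  forall t, (exists x y, x <> y /\ t = Rabs (ln (d (f x) (f y) / d (g x) (g y)))) -> t <= K * K'.
Proof.
  intros HK HK' Hf Hg t [x [y [Hxy ->]]]. pose proof (dpos x y Hxy).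
  destruct (Hf x y), (Hg x y).
  assert (Ha : 0 < d (f x) (f y)) by nra. assert (Hb : 0 < d (g x) (g y)) by nra.
  apply ln_abs_bound. apply Rdiv_lt_0_compat; auto.
  - apply Rmult_le_reg_r with (d (g x) (g y)); auto. unfold Rdiv. rewrite Rmult_assoc, Rinv_l by lra. nra.
  - rewrite Rinv_div. apply Rmult_le_reg_r with (d (f x) (f y)); auto. unfold Rdiv. rewrite Rmult_assoc, Rinv_l by lra. nra.
Qed.

Lemma LemB K K' f g eps : 0 < K -> 0 < K' -> PL K f -> PL K' g -> 0 < eps <= 1 ->
  K * dW' M f g <= eps / 2 -> dL' M f g <= eps.
Proof.
  intros HK HK' Hf Hg He Hs. unfold dL'. apply sup0_le; [|lra].
  intros t [x [y [Hxy ->]]]. pose proof (dpos x y Hxy). destruct (Hf x y), (Hg x y).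
  apply pairB with (dd := d x y) (K := K) (w := dW' M f g); auto.
  nra. unfold dW'. apply sup0_ub with (K + K'). apply (Wset_bound K K' f g); auto.
  exists x, y; auto.
Qed.

Lemma LemA K K' f g eta : 0 < K -> 0 < K' -> PL K f -> PL K' g -> 0 < eta <= 1 ->
  dL' M f g <= ln (1 + eta) -> dW' M f g <= 2 * K * eta.
Proof.
  intros HK HK' Hf Hg He Hs. unfold dW'. apply sup0_le; [|nra].
  intros t [x [y [Hxy ->]]]. pose proof (dpos x y Hxy). destruct (Hf x y), (Hg x y).
  apply pairA with (L := dL' M f g); auto. nra. nra.
  unfold dL'. apply sup0_ub with (K * K'). apply (Lset_bound K K' f g); auto.
  exists x, y; auto.
Qed.

Lemma dL'_ge0 K K' f g : 0 < K -> 0 < K' -> PL K f -> PL K' g -> 0 <= dL' M f g.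
Proof. intros. apply sup0_ge0 with (K * K'). apply (Lset_bound K K' f g); auto. Qed.
Lemma dW'_ge0 K K' f g : 0 < K -> 0 < K' -> PL K f -> PL K' g -> 0 <= dW' M f g.
Proof. intros. apply sup0_ge0 with (K + K'). apply (Wset_bound K K' f g); auto. Qed.

End S.

Theorem mainTheorem5 (M : Metric_Space) (Hc : compact_space M) :
  forall U : hpair M -> Prop, lip_open M (dL M) U <-> lip_open M (dW M) U.
Proof.
  intro U. split; intros H p Hp Up; destruct (H p Hp Up) as [r [Hr Hq]];
  destruct (biLip_P M p Hp) as [K [HK [Hf Hg]]].
  - set (eps := Rmin 1 (r/4)).
    assert (He : 0 < eps <= 1) by (split; [apply Rmin_glb_lt; lra | apply Rmin_l]).
    assert (He2 : eps <= r/4) by apply Rmin_r.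
    exists (Rmin (r/4) (eps / (2*K))). split.
    { apply Rmin_glb_lt. lra. apply Rdiv_lt_0_compat; lra. }
    intros q Hq' Hd. destruct (biLip_P M q Hq') as [K' [HK' [Hf' Hg']]].
    apply Hq; auto. unfold dW, dL in *.
    pose proof (Rmin_l (r/4) (eps/(2*K))). pose proof (Rmin_r (r/4) (eps/(2*K))).
    pose proof (dC0_ge0 M Hc p q).
    pose proof (dW'_ge0 M K K' _ _ HK HK' Hf Hf'). pose proof (dW'_ge0 M K K' _ _ HK HK' Hg Hg').
    assert (A1 : K * dW' M (fst p) (fst q) <= eps / 2).
    { assert (dW' M (fst p) (fst q) <= eps/(2*K)) by lra.
      apply Rmult_le_compat_l with (r := K) in H5; [|lra].
      replace (K * (eps / (2*K))) with (eps/2) in H5 by (field; lra). lra. }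
    assert (A2 : K * dW' M (snd p) (snd q) <= eps / 2).
    { assert (dW' M (snd p) (snd q) <= eps/(2*K)) by lra.
      apply Rmult_le_compat_l with (r := K) in H5; [|lra].
      replace (K * (eps / (2*K))) with (eps/2) in H5 by (field; lra). lra. }
    pose proof (LemB M K K' _ _ eps HK HK' Hf Hf' He A1).
    pose proof (LemB M K K' _ _ eps HK HK' Hg Hg' He A2).
    lra.
  - set (eta := Rmin 1 (r/(8*K))).
    assert (He : 0 < eta <= 1).
    { split; [apply Rmin_glb_lt; [lra|apply Rdiv_lt_0_compat; lra] | apply Rmin_l]. }
    assert (He2 : eta <= r/(8*K)) by apply Rmin_r.
    assert (Hl : 0 < ln (1 + eta)).
    { rewrite <- ln_1. apply ln_increasing; lra. }
    assert (HKe : 2 * K * eta <= r / 4).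
    { apply Rmult_le_compat_l with (r := 2 * K) in He2; [|lra].
      replace (2 * K * (r / (8 * K))) with (r/4) in He2 by (field; lra). lra. }
    exists (Rmin (r/4) (ln (1 + eta))). split.
    { apply Rmin_glb_lt; lra. }
    intros q Hq' Hd. destruct (biLip_P M q Hq') as [K' [HK' [Hf' Hg']]].
    apply Hq; auto. unfold dW, dL in *.
    pose proof (Rmin_l (r/4) (ln (1 + eta))). pose proof (Rmin_r (r/4) (ln (1 + eta))).
    pose proof (dC0_ge0 M Hc p q).
    pose proof (dL'_ge0 M K K' _ _ HK HK' Hf Hf'). pose proof (dL'_ge0 M K K' _ _ HK HK' Hg Hg').
    pose proof (LemA M K K' _ _ eta HK HK' Hf Hf' He ltac:(lra)).
    pose proof (LemA M K K' _ _ eta HK HK' Hg Hg' He ltac:(lra)).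
    lra.
Qed.
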